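(* Let $M\in\Lambda_{\mathrm{NF}}$ have blueprint $\alpha$, with $\mathrm{Free}(M)=(x_1,\dots,x_n)$ and $\Omega(x_1,\dots,x_n)=(\chi_1,\dots,\chi_n)$. For each $i\in\{0,\dots,n\}$, let $\alpha_i$ be the restriction of $\alpha$ to $\mathrm{dom}(\alpha)\cap\{a : \mathrm{Free}(M|_a)\subseteq\{x_1,\dots,x_i\}\}$, and let $\beta_i$ be the blueprint of $\lambda x_{i+1}\dots x_n.M$. Then: (1) for each $i\in\{0,\dots,n\}$, $\mathrm{dom}(\beta_i)=\{1^{n-i}\cdot a : a\in\mathrm{dom}(\alpha_i)\}$ and $\beta_i|_{1^{n-i}}=\alpha_i$, where $1^k$ denotes the address consisting of $k$ ones; (2) for each $i\in\{1,\dots,n\}$: (a) there exist addresses $a^i_0,\dots,a^i_{p_i}$ with $\{a^i_0,\dots,a^i_{p_i}\}=\{a : M|_a=x_i\}$ and $\alpha_i\rhd^{a^i_0}_{\chi_i}\cdots\rhd^{a^i_{p_i}}_{\chi_i}\alpha_{i-1}$; (b) if $\{b_0,\dots,b_{p_i}\}=\{a : M|_a=x_i\}$ and $\alpha_i\rhd^{b_0}_{\chi_i}\cdots\rhd^{b_{p_i}}_{\chi_i}\alpha'$, then $\alpha'=\alpha_{i-1}$; (3) $(\chi_1,\dots,\chi_n)\in\mathbb F(\alpha)$.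
   Context: Formulas are built from atoms with $\to$. Let $\mathcal X$ be a countably infinite set of variables with an injective map $\mathcal O:\mathcal X\to\mathbb N$; $x<y$ iff $\mathcal O(x)<\mathcal O(y)$. Terms are pure $\lambda$-terms over $\mathcal X$, not identified up to $\alpha$-conversion; no two $\lambda$'s bind the same variable and no variable is both free and bound. $\mathrm{Free}(M)$ is the strictly increasing sequence of free variables of $M$. HRM terms: variables; $\lambda x.M$ with $M$ HRM and $x$ the greatest free variable of $M$; $(MN)$ with $M,N$ HRM and every free variable of $M$ $\le$ some free variable of $N$. Fix $\Omega$ from variables to formulas with each $\Omega^{-1}(\phi)$ infinite; $\Omega(x_1,\dots,x_n)=(\Omega(x_1),\dots,\Omega(x_n))$. Typing: $x:\Omega(x)$; $\lambda x.M:\chi\to\psi$ if $x:\chi$, $M:\psi$, $\lambda x.M$ HRM; $(MN):\psi$ if $M:\chi\to\psi$, $N:\chi$, $(MN)$ HRM. $\Lambda_{\mathrm{NF}}$ is the set of typed $\beta$-normal terms. Addresses are finite sequences of positive integers with prefix order $\le$, concatenation $\cdot$, empty address $\varepsilon$. Terms are identified with trees: $x$ is $\varepsilon\mapsto x$; $\lambda x.M$ maps $\varepsilon$ to $\lambda x$ with subtree $M$ at $(1)$; $(M_1M_2)$ maps $\varepsilon$ to $@$ with subtrees $M_1,M_2$ at $(1),(2)$; $M|_a$ is the subterm at $a$. For a partial tree $\pi$, $\pi|_a$ is $c\mapsto\pi(a\cdot c)$. Let $\mathfrak S$ consist of all formulas (arity 0) and symbols $@_\phi$ (arity 2). A blueprint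 is a finite partial tree with values in $\mathfrak S$ such that if $\alpha(a)=@_\phi$ then $\alpha|_{a\cdot(1)},\alpha|_{a\cdot(2)}$ are non-empty. Notation: $\emptyset_{\mathbb B}$ empty blueprint; $\phi$ denotes $\varepsilon\mapsto\phi$; $@_\phi(\alpha_1,\alpha_2)$ ($\alpha_i$ non-empty) has root $@_\phi$ and $\alpha_i$ at $(i)$; for pairwise incomparable $\bar a=(a_1,\dots,a_k)$, $*_{\bar a}(\alpha_1,\dots,\alpha_k)$ is the blueprint of minimal domain with restriction $\alpha_i$ at $a_i$; $*(\alpha_1,\dots,\alpha_k)=*_{((1),\dots,(k))}(\dots)$. The stable part of $M\in\Lambda_{\mathrm{NF}}$ is the set of $a\in\mathrm{dom}(M)$ with $\mathrm{Free}(M|_a)\subseteq\mathrm{Free}(M)$ and $M|_a$ a variable or an application. The blueprint of $M$ maps each $a$ in the stable part to $\psi$ if $M|_a$ is a variable of type $\psi$, and to $@_\psi$ if $M|_a$ is an application of type $\psi$. Extraction $\alpha\rhd^a_\phi\beta$: (1) $\phi\rhd^\varepsilon_\phi\emptyset_{\mathbb B}$; (2) if $\alpha\rhd^a_\phi\beta$ ($\gamma,\alpha$ non-empty) then $@_\psi(\gamma,\alpha)\rhd^{(2)\cdot a}_\phi*(\gamma,\beta)$; (3) if $\alpha\rhd^a_\phi\beta$, $b\ne\varepsilon$, $(b,c_1,\dots,c_k)$ pairwise incomparable, then $*_{(b,c_1,\dots,c_k)}(\alpha,\gamma_1,\dots,\gamma_k)\rhd^{b\cdot a}_\phi*_{(b,c_1,\dots,c_k)}(\beta,\gamma_1,\dots,\gamma_k)$.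 Write $\alpha\rhd_\phi\beta$ if $\alpha\rhd^a_\phi\beta$ for some $a$, and $\rhd^+_\phi$ for its transitive closure. $\mathbb F(\alpha)$ is the set of sequences $(\phi_1,\dots,\phi_n)$ ($n\ge0$) such that $\alpha\rhd^+_{\phi_n}\cdots\rhd^+_{\phi_1}\emptyset_{\mathbb B}$ (through some intermediate blueprints). *)

(* Defs.v *)
From mathcomp Require Import all_boot.
Set Implicit Arguments. Unset Strict Implicit. Unset Printing Implicit Defensive.

Inductive formula := Atom of nat | Arr of formula & formula.

Definition formula_eq_dec (a b : formula) : {a = b} + {a <> b}.
Proof. decide equality; by case: (@eqP _ n n0); [left|right]. Defined.

(** Variables: the countably infinite set nat (the order is given by a
    separate injective map O : var -> nat). *)
Definition var := nat.

(** Pure lambda-terms, not identified up to alpha-conversion. *)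
Inductive term := Var of var | Lam of var & term | App of term & term.

Fixpoint fv (M : term) : seq var :=
  match M with
  | Var x => [:: x]
  | Lam x N => filter (fun y => y != x) (fv N)
  | App N P => fv N ++ fv P
  end.

Fixpoint bv (M : term) : seq var :=
  match M with
  | Var _ => [::]
  | Lam x N => x :: bv N
  | App N P => bv N ++ bv P
  end.

Definition wf_term (M : term) : bool :=
  uniq (bv M) && all (fun x => x \notin bv M) (fv M).

Definition Free (O : var -> nat) (M : term) : seq var :=
  sort (fun x y => O x <= O y) (undup (fv M)).

Fixpoint HRM (O : var -> nat) (M : term) : bool :=
  match M with
  | Var _ => true
  | Lam x N => [&& HRM O N, x \in fv N & all (fun y => O y <= O x) (fv N)]
  | App N P => [&& HRM O N, HRM O P &
                 all (fun y => has (fun z => O y <= O z) (fv P)) (fv N)]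
  end.

Inductive typed (O : var -> nat) (Om : var -> formula) : term -> formula -> Prop :=
  | ty_var x : typed O Om (Var x) (Om x)
  | ty_lam x N psi : typed O Om N psi -> HRM O (Lam x N) ->
      typed O Om (Lam x N) (Arr (Om x) psi)
  | ty_app N P chi psi : typed O Om N (Arr chi psi) -> typed O Om P chi ->
      HRM O (App N P) -> typed O Om (App N P) psi.

Fixpoint beta_normal (M : term) : bool :=
  match M with
  | Var _ => true
  | Lam _ N => beta_normal N
  | App N P => [&& (if N is Lam _ _ then false else true), beta_normal N & beta_normal P]
  end.

Definition LambdaNF (O : var -> nat) (Om : var -> formula) (M : term) : Prop :=
  [/\ wf_term M, (exists psi, typed O Om M psi) & beta_normal M].

Fixpoint typeof (Om : var -> formula) (M : term) : option formula :=
  match M with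
  | Var x => Some (Om x)
  | Lam x N => omap (Arr (Om x)) (typeof Om N)
  | App N P =>
      match typeof Om N, typeof Om P with
      | Some (Arr chi psi), Some chi' =>
          if formula_eq_dec chi chi' then Some psi else None
      | _, _ => None
      end
  end.

Definition address := seq nat.

Fixpoint subterm (M : term) (a : address) : option term :=
  match a with
  | [::] => Some M
  | k :: a' =>
      match M, k with
      | Lam _ N, 1 => subterm N a'
      | App N _, 1 => subterm N a'
      | App _ P, 2 => subterm P a'
      | _, _ => None
      end
  end.

(** Blueprints: partial trees with values in formulas (arity 0) and @_phi (arity 2). *)
Inductive sym := SForm of formula | SApp of formula.

Definition blueprint := address -> option sym.

Definition bp_empty : blueprint := fun _ => None.
Definition bp_single (phi : formula) : blueprint :=
  fun a => if a is [::] then Some (SForm phi) else None.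
Definition bp_restr (al : blueprint) (a : address) : blueprint := fun c => al (a ++ c).
Definition bp_nonempty (al : blueprint) : Prop := exists a, al a <> None.

Definition is_blueprint (al : blueprint) : Prop :=
  [/\ (exists s : seq address, forall a, al a <> None -> a \in s),
      (forall a, al a <> None -> all (fun k => 0 < k) a) &
      (forall a phi, al a = Some (SApp phi) ->
         bp_nonempty (bp_restr al (rcons a 1)) /\ bp_nonempty (bp_restr al (rcons a 2)))].

Definition prefix (a c : address) : bool := a == take (size a) c.
Definition incomparable (a c : address) : bool := ~~ prefix a c && ~~ prefix c a.

Definition bp_app (psi : formula) (g al : blueprint) : blueprint :=
  fun c => match c with
           | [::] => Some (SApp psi)
           | 1 :: d => g d
           | 2 :: d => al d
           | _ => None
           end.

(** *_{(a_1,...,a_k)}(al_1,...,al_k), given as a list of pairs (a_i, al_i). *)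
Fixpoint bp_star (ps : seq (address * blueprint)) (c : address) : option sym :=
  match ps with
  | [::] => None
  | (a, al) :: ps' => if prefix a c then al (drop (size a) c) else bp_star ps' c
  end.

Fixpoint all_bp (ps : seq (address * blueprint)) : Prop :=
  match ps with
  | [::] => True
  | p :: ps' => is_blueprint p.2 /\ all_bp ps'
  end.

(** Extraction  al |>^a_phi be  (blueprints compared extensionally). *)
Inductive extr (phi : formula) : address -> blueprint -> blueprint -> Prop :=
  | extr_base al be :
      al =1 bp_single phi -> be =1 bp_empty -> extr phi [::] al be
  | extr_app a al0 be0 psi g al be :
      extr phi a al0 be0 -> is_blueprint g -> bp_nonempty g -> bp_nonempty al0 ->
      al =1 bp_app psi g al0 ->
      be =1 bp_star [:: ([:: 1], g); ([:: 2], be0)] ->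
      extr phi (2 :: a) al be
  | extr_ctx a al0 be0 b (cs : seq (address * blueprint)) al be :
      extr phi a al0 be0 -> b != [::] ->
      all (fun c => all (fun k => 0 < k) c) (b :: map fst cs) ->
      pairwise incomparable (b :: map fst cs) ->
      all_bp cs ->
      al =1 bp_star ((b, al0) :: cs) ->
      be =1 bp_star ((b, be0) :: cs) ->
      extr phi (b ++ a) al be.

Fixpoint extr_seq (phi : formula) (as_ : seq address) (al be : blueprint) : Prop :=
  match as_ with
  | [::] => al =1 be
  | a :: as' => exists g, extr phi a al g /\ extr_seq phi as' g be
  end.

Inductive extr_plus (phi : formula) : blueprint -> blueprint -> Prop :=
  | ep_one a al be : extr phi a al be -> extr_plus phi al be
  | ep_step a al g be : extr phi a al g -> extr_plus phi g be -> extr_plus phi al be.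

(** al |>+_{phi_n} ... |>+_{phi_1} empty, with the list given reversed. *)
Fixpoint Fchain (al : blueprint) (rs : seq formula) : Prop :=
  match rs with
  | [::] => al =1 bp_empty
  | phi :: rs' => exists be, extr_plus phi al be /\ Fchain be rs'
  end.

Definition inF (al : blueprint) (s : seq formula) : Prop := Fchain al (rev s).

Definition bp_of (Om : var -> formula) (M : term) : blueprint :=
  fun a =>
    match subterm M a with
    | Some N =>
        if all (fun x => x \in fv M) (fv N) then
          match N with
          | Var x => Some (SForm (Om x))
          | App _ _ => omap SApp (typeof Om N)
          | Lam _ _ => None
          end
        else None
    | None => None
    end.

Definition bp_trunc (O : var -> nat) (M : term) (al : blueprint) (i : nat) : blueprint :=
  fun a =>
    match subterm M a with
    | Some N => if all (fun x => x \in take i (Free O M)) (fv N) then al a else None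
    | None => None
    end.

Definition lams (xs : seq var) (M : term) : term := foldr Lam M xs.

(* Main.v *)
Require Import Defs.
From mathcomp Require Import all_boot.
Set Implicit Arguments. Unset Strict Implicit. Unset Printing Implicit Defensive.

Notation pfx := Defs.prefix.

Lemma pfxP (a c : address) : reflect (exists d, c = a ++ d) (pfx a c).
Proof.
rewrite /Defs.prefix; apply: (iffP eqP) => [H | [d ->]].
  by exists (drop (size a) c); rewrite {1}H cat_take_drop.
by rewrite take_size_cat.
Qed.

Lemma pfx_cons (x y : nat) c a : pfx (x :: c) (y :: a) = (x == y) && pfx c a.
Proof. by rewrite /Defs.prefix /= eqseq_cons. Qed.

Lemma pfx_nil c : pfx [::] c.
Proof. by rewrite /Defs.prefix take0. Qed.

Lemma pfx_niln c : pfx c [::] = (c == [::]).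
Proof. by case: c. Qed.

Lemma pfx_cat a c d : pfx (a ++ c) (a ++ d) = pfx c d.
Proof. by elim: a => //= x a IH; rewrite pfx_cons eqxx. Qed.

Lemma pfx_catr a d : pfx a (a ++ d).
Proof. by apply/pfxP; exists d. Qed.

Lemma pfx_trans a b c : pfx a b -> pfx b c -> pfx a c.
Proof. by move=> /pfxP [d ->] /pfxP [e ->]; rewrite -catA pfx_catr. Qed.

Lemma pfx_split c b a : pfx c (b ++ a) -> ~~ pfx b c -> pfx c b.
Proof.
elim: b c => [|x b IH] [|y c] //=; rewrite ?pfx_nil //.
rewrite !pfx_cons => /andP [/eqP -> H]; rewrite eqxx /= => H2.
exact: IH.
Qed.

Lemma subterm_cat T c d :
  subterm T (c ++ d) = if subterm T c is Some N then subterm N d else None.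
Proof.
elim: c T => [|k c IH] T /=; first by case: T.
case: T => [x|y N|N P] //; case: k => [|[|[|k]]] //=.
Qed.

Lemma subterm_nil T : subterm T [::] = Some T. Proof. by case: T. Qed.

Lemma subterm_cons T k c :
  subterm T (k :: c) = if subterm T [:: k] is Some N then subterm N c else None.
Proof. exact: (subterm_cat T [:: k] c). Qed.

Lemma subterm_k T k c N : subterm T (k :: c) = Some N -> k = 1 \/ k = 2.
Proof. by case: T => [x|y P|P Q]; case: k => [|[|[|k]]] //=; auto. Qed.

Lemma subterm_pos T a N : subterm T a = Some N -> all (fun k => 0 < k) a.
Proof.
elim: a T => [|k a IH] T //= H.
have := subterm_k H; rewrite subterm_cons in H.
case E: (subterm T [:: k]) H => [N'|] // H.
by case=> ->; rewrite (IH _ H).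
Qed.

Fixpoint addrs (T : term) : seq address :=
  [::] :: match T with
          | Var _ => [::]
          | Lam _ N => map (cons 1) (addrs N)
          | App N P => map (cons 1) (addrs N) ++ map (cons 2) (addrs P)
          end.

Lemma addrsP T a : subterm T a <> None -> a \in addrs T.
Proof.
elim: T a => [x|y N IH|N IHN P IHP] [|k a] //=; rewrite ?in_cons //=;
  case: k => [|[|[|k]]] //= H.
- by rewrite mem_map; [exact: IH | move=> ? ? []].
- by rewrite mem_cat mem_map; [rewrite IHN | move=> ? ? []].
- by rewrite mem_cat orbC mem_map; [rewrite IHP | move=> ? ? []].
Qed.

Lemma HRM_sub O T c N : HRM O T -> subterm T c = Some N -> HRM O N.
Proof.
elim: c T => [|k c IH] T /=; first by rewrite subterm_nil => ? [<-].
case: T => [x|y P|P Q] //=; case: k => [|[|[|k]]] //=.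
- by move=> /and3P [H _ _]; apply: IH.
- by move=> /and3P [H _ _]; apply: IH.
- by move=> /and3P [_ H _]; apply: IH.
Qed.

Lemma bn_sub T c N : beta_normal T -> subterm T c = Some N -> beta_normal N.
Proof.
elim: c T => [|k c IH] T /=; first by rewrite subterm_nil => ? [<-].
case: T => [x|y P|P Q] //=; case: k => [|[|[|k]]] //=.
- by move=> H; apply: IH.
- by move=> /and3P [_ H _]; apply: IH.
- by move=> /and3P [_ _ H]; apply: IH.
Qed.

Lemma bv_sub T c N x : subterm T c = Some N -> x \in bv N -> x \in bv T.
Proof.
elim: c T => [|k c IH] T /=; first by rewrite subterm_nil => [[<-]].
case: T => [y|y P|P Q] //=; case: k => [|[|[|k]]] //=.
- by move=> H /(IH _ H) Hx; rewrite ?in_cons ?mem_cat Hx ?orbT.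
- by move=> H /(IH _ H) Hx; rewrite ?in_cons ?mem_cat Hx ?orbT.
- by move=> H /(IH _ H) Hx; rewrite ?in_cons ?mem_cat Hx ?orbT.
Qed.

Lemma occ_fv T d x : subterm T d = Some (Var x) -> x \notin bv T -> x \in fv T.
Proof.
elim: T d => [y|y N IH|N IHN P IHP] [|k d] //=.
- by case=> ->; rewrite inE.
- case: k => [|[|k]] //= H; rewrite in_cons negb_or => /andP [Hy Hb].
  by rewrite mem_filter Hy (IH _ H).
- case: k => [|[|[|k]]] //= H; rewrite mem_cat negb_or => /andP [H1 H2].
  + by rewrite mem_cat (IHN _ H).
  + by rewrite mem_cat (IHP _ H) ?orbT.
Qed.

Lemma fv_occ T x : x \in fv T -> exists d, subterm T d = Some (Var x).
Proof.
elim: T => [y|y N IH|N IHN P IHP] /=.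
- by rewrite inE => /eqP ->; exists [::].
- by rewrite mem_filter => /andP [_ /IH [d Hd]]; exists (1 :: d).
- rewrite mem_cat => /orP [/IHN [d Hd]|/IHP [d Hd]]; [exists (1 :: d)|exists (2 :: d)] => //.
Qed.

Lemma bn_fv T : beta_normal T -> (if T is Lam _ _ then false else true) ->
  exists x, x \in fv T.
Proof.
elim: T => [y|y N IH|N IHN P IHP] //= .
- by exists y; rewrite inE.
- move=> /and3P [H1 H2 _] _; have [x Hx] := IHN H2 H1.
  by exists x; rewrite mem_cat Hx.
Qed.

Lemma typed_HRM O Om T psi : typed O Om T psi -> HRM O T.
Proof. by case. Qed.

Fixpoint occ (x : var) (T : term) : seq address :=
  match T with
  | Var y => if y == x then [:: [::]] else [::]
  | Lam _ N => map (cons 1) (occ x N)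
  | App N P => map (cons 2) (occ x P) ++ map (cons 1) (occ x N)
  end.

Lemma occP x T a : a \in occ x T <-> subterm T a = Some (Var x).
Proof.
elim: T a => [y|y N IH|N IHN P IHP] a /=.
- case: a => [|k a] /=; case: (y =P x) => [E|Hn] /=; split => //; rewrite ?inE ?E //.
  by move=> [E].
- split.
  + by move=> /mapP [a' /IH H ->].
  + case: a => [|[|[|k]] a] //= H; apply/mapP; exists a => //; exact/IH.
- split.
  + by rewrite mem_cat => /orP [] /mapP [a' H ->] /=; [apply/IHP|apply/IHN].
  + case: a => [|[|[|[|k]]] a] //= H; rewrite mem_cat; apply/orP.
    * by right; apply/mapP; exists a => //; exact/IHN.
    * by left; apply/mapP; exists a => //; exact/IHP.
Qed.

Lemma occ_uniq x T : uniq (occ x T).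
Proof.
elim: T => [y|y N IH|N IHN P IHP] /=; first by case: eqP.
  by rewrite map_inj_uniq // => ? ? [].
rewrite cat_uniq !map_inj_uniq ?IHN ?IHP //= ?andbT; try by move=> ? ? [].
by apply/hasPn => a /mapP [a' _ ->]; apply/mapP => [[a'' _]].
Qed.

Lemma occ_order x T p d d' :
  (p ++ 1 :: d) \in occ x T -> (p ++ 2 :: d') \in occ x T ->
  index (p ++ 2 :: d') (occ x T) < index (p ++ 1 :: d) (occ x T).
Proof.
elim: T p => [y|y N IH|N IHN P IHP] p /=.
- by case: eqP => // _; case: p.
- case: p => [|k p] /=; first by move=> _ /mapP [].
  move=> /mapP [a1 H1 [Hk E1]] /mapP [a2 H2 [_ E2]]; subst k.
  rewrite !index_map; last by move=> ? ? [].
  by rewrite -E1 -E2 in H1 H2 *; apply: IH.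
  by move=> ? ? [].
- rewrite !mem_cat !index_cat.
  case: p => [|k p] /=.
    move=> _ H2; have H2' : 2 :: d' \in map (cons 2) (occ x P).
      by case/orP: H2 => // /mapP [].
    have H1' : 1 :: d \notin map (cons 2) (occ x P) by apply/mapP => [[]].
    by rewrite H2' (negbTE H1') (leq_trans _ (leq_addr _ _)) // index_mem.
  case: k => [|[|[|k]]].
  + by move=> /orP [] /mapP [].
  + move=> /orP [/mapP [] //|/mapP [a1 H1 [E1]]] /orP [/mapP [] //|/mapP [a2 H2 [E2]]].
    have /negbTE -> : (1 :: p ++ 2 :: d') \notin map (cons 2) (occ x P) by apply/mapP => [[]].
    have /negbTE -> : (1 :: p ++ 1 :: d) \notin map (cons 2) (occ x P) by apply/mapP => [[]].
    rewrite ltn_add2l !index_map; last by move=> ? ? [].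
    by rewrite -E1 -E2 in H1 H2 *; apply: IHN.
    by move=> ? ? [].
  + move=> /orP [/mapP [a1 H1 [E1]]|/mapP [] //] /orP [/mapP [a2 H2 [E2]]|/mapP [] //].
    have -> : (2 :: p ++ 2 :: d') \in map (cons 2) (occ x P) by apply/mapP; exists a2; rewrite ?E2.
    have -> : (2 :: p ++ 1 :: d) \in map (cons 2) (occ x P) by apply/mapP; exists a1; rewrite ?E1.
    rewrite !index_map; last by move=> ? ? [].
    by rewrite -E1 -E2 in H1 H2 *; apply: IHP.
    by move=> ? ? [].
  + by move=> /orP [] /mapP [].
Qed.

Definition del (a : address) (al : blueprint) : blueprint :=
  fun c => if pfx c a then None else al c.
Definition D (S : seq address) (al : blueprint) : blueprint :=
  fun c => if has (pfx c) S then None else al c.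

Lemma bp_star_none cs c : all (fun a => ~~ pfx a c) (map fst cs) -> bp_star cs c = None.
Proof.
elim: cs => [|[a g] cs IH] //= /andP [H1 H2].
by rewrite (negbTE H1) IH.
Qed.

Lemma ext_sound phi a al be : extr phi a al be -> be =1 del a al.
Proof.
elim=> {a al be}.
- move=> al be Hal Hbe c; rewrite /del Hbe Hal.
  by case: c.
- move=> a al0 be0 psi g al be _ IH _ _ _ Hal Hbe [|k c]; rewrite /del Hbe Hal //=.
  case: k => [|[|[|k]]] //=; rewrite ?pfx_cons /= ?drop0 ?pfx_nil //.
- move=> a al0 be0 b cs al be _ IH Hb _ Hinc _ Hal Hbe c.
  rewrite /del Hbe Hal /=.
  case Hbc: (pfx b c).
    move/pfxP: Hbc => [d ->]; rewrite drop_size_cat // pfx_cat.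
    by rewrite IH.
  case Hc: (pfx c (b ++ a)) => //.
  have Hcb := pfx_split Hc (negbT Hbc).
  apply: bp_star_none; apply/allP => c' Hin /=.
  apply/negP => Hc'.
  move: Hinc; rewrite /= => /andP [/allP /(_ c') H _].
  move: Hin; move/H; rewrite /incomparable => /andP [_ /negP]; apply.
  exact: pfx_trans Hc' Hcb.
Qed.

Lemma extr_ext phi a al be al' be' :
  extr phi a al be -> al =1 al' -> be =1 be' -> extr phi a al' be'.
Proof.
case=> {a al be}.
- move=> al be H1 H2 E1 E2; apply: extr_base => c; by rewrite -?E1 -?E2.
- move=> a al0 be0 psi g al be H Hg Hn Hn0 H1 H2 E1 E2.
  by apply: (extr_app H Hg Hn Hn0) => c; rewrite -?E1 -?E2.
- move=> a al0 be0 b cs al be H Hb Hp Hi Hc H1 H2 E1 E2.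
  by apply: (extr_ctx H Hb Hp Hi Hc) => c; rewrite -?E1 -?E2.
Qed.

Lemma extr_seq_sound phi bs al be : extr_seq phi bs al be -> be =1 D bs al.
Proof.
elim: bs al => [|a bs IH] al /=.
  by move=> H c; rewrite /D /= H.
move=> [g [H1 H2]] c; rewrite (IH _ H2 c) /D /= (ext_sound H1 c) /del.
by case: (pfx c a); case: has.
Qed.

Lemma extr_seq_plus phi a bs al be :
  extr_seq phi (a :: bs) al be -> extr_plus phi al be.
Proof.
elim: bs a al => [|a2 bs IH] a al /= [g [H1 H2]].
  by apply: ep_one; apply: extr_ext H1 _ H2.
by apply: ep_step H1 (IH _ _ H2).
Qed.

Lemma extr_plus_extl phi al al' be : extr_plus phi al be -> al =1 al' -> extr_plus phi al' be.
Proof.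
case=> [a al0 be0 H|a al0 g be0 H Hp] E.
  by apply: ep_one; apply: extr_ext H E _.
by apply: ep_step _ Hp; apply: extr_ext H E _.
Qed.

Definition shape_ok (T : term) (al : blueprint) : Prop :=
  forall c, match al c with
            | None => True
            | Some (SApp _) => exists N P, subterm T c = Some (App N P)
            | Some (SForm _) => exists x, subterm T c = Some (Var x)
            end.

Lemma shape_sub T al c : shape_ok T al -> al c <> None -> subterm T c <> None.
Proof.
move=> /(_ c); case: (al c) => [[f|f]|] //.
- by move=> [x ->].
- by move=> [N [P ->]].
Qed.

Lemma shape_kid T al j d : shape_ok T al -> al (j :: d) <> None -> j = 1 \/ j = 2.
Proof.
move=> Hs /(shape_sub Hs); case E: (subterm T (j :: d)) => [N|] // _.
exact: subterm_k E.
Qed.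

Lemma restr_bp al k : is_blueprint al -> is_blueprint (bp_restr al [:: k]).
Proof.
case=> [[s Hs] Hp Ha]; split.
- exists (map behead s) => c H; apply/mapP; exists (k :: c) => //; exact: Hs.
- by move=> c /Hp /andP [].
- by move=> c phi H; exact: (Ha (k :: c) phi H).
Qed.

Lemma D_bp S al : is_blueprint al -> is_blueprint (D S al).
Proof.
case=> [[s Hs] Hp Ha]; split.
- exists s => c; rewrite /D; case: has => //; exact: Hs.
- by move=> c; rewrite /D; case: has => //; exact: Hp.
- move=> c phi; rewrite /D; case Hc: has => // H.
  have [[d1 H1] [d2 H2]] := Ha _ _ H.
  have keep e : has (pfx (c ++ e)) S = false.
    apply/negbTE/negP => /hasP [s' Hs' He]; move/negbT: Hc => /hasP; apply.
    by exists s' => //; apply: pfx_trans He; apply: pfx_catr.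
  move: H1 H2; rewrite /bp_restr -!cats1 -!catA /= => H1 H2.
  by split; [exists d1|exists d2]; rewrite /bp_restr -catA /= keep.
Qed.

Lemma ext_complete phi a : forall T al, is_blueprint al -> shape_ok T al ->
  al a = Some (SForm phi) ->
  (forall p k d, a = p ++ k :: d ->
     al p = None \/ ((exists psi, al p = Some (SApp psi)) /\ k = 2)) ->
  extr phi a al (del a al).
Proof.
elim: a => [|k a IH] T al Hb Hs Ha Hp.
  have [x Hx] : exists x, subterm T [::] = Some (Var x) by move: (Hs [::]); rewrite Ha.
  rewrite subterm_nil in Hx; case: Hx => HT; subst T.
  have Hn c : c != [::] -> al c = None.
    case: c => [|j d] // _; case E: (al (j :: d)) => [v|] //.
    by have := shape_sub Hs (c := j :: d); rewrite E => /(_ ltac:(discriminate)).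
  apply: extr_base => [[|j d]|[|j d]] //; rewrite /del /= ?Ha ?Hn //.
have [x Hx] : exists x, subterm T (k :: a) = Some (Var x) by move: (Hs (k :: a)); rewrite Ha.
have Hk := subterm_k Hx.
move: Hx; rewrite subterm_cons; case ET: (subterm T [:: k]) => [T'|] // Hx.
have Hs' : shape_ok T' (bp_restr al [:: k]).
  by move=> c; move: (Hs (k :: c)); rewrite /bp_restr /= subterm_cons ET.
have IH' := IH T' _ (restr_bp k Hb) Hs' Ha.
have {IH'} IH' : extr phi a (bp_restr al [:: k]) (del a (bp_restr al [:: k])).
  apply: IH' => p j d Ea; apply: (Hp (k :: p) j d); by rewrite Ea.
have Hnone j d : j != 1 -> j != 2 -> al (j :: d) = None.
  move=> H1 H2; case E: (al (j :: d)) => [v|] //.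
  have := shape_kid (j := j) (d := d) Hs; rewrite E => /(_ ltac:(discriminate)) [] /eqP.
  - by rewrite (negbTE H1).
  - by rewrite (negbTE H2).
case: (Hp [::] k a erefl) => [H0|[[psi H0] Ek]].
- case: Hk => ?; subst k.
  + apply: (extr_ctx (b := [:: 1]) (cs := [:: ([:: 2], bp_restr al [:: 2])]) IH') => //.
    * by split => //; apply: restr_bp.
    * move=> [|[|[|[|j]]] d]; rewrite /= ?pfx_cons ?pfx_nil ?drop0 /=; by [rewrite ?H0 | rewrite Hnone].
    * move=> [|[|[|[|j]]] d]; rewrite /del /= ?pfx_cons ?pfx_nil ?drop0 /=; by [rewrite ?H0 | rewrite Hnone].
  + apply: (extr_ctx (b := [:: 2]) (cs := [:: ([:: 1], bp_restr al [:: 1])]) IH') => //.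
    * by split => //; apply: restr_bp.
    * move=> [|[|[|[|j]]] d]; rewrite /= ?pfx_cons ?pfx_nil ?drop0 /=; by [rewrite ?H0 | rewrite Hnone].
    * move=> [|[|[|[|j]]] d]; rewrite /del /= ?pfx_cons ?pfx_nil ?drop0 /=; by [rewrite ?H0 | rewrite Hnone].
- subst k.
  case: Hb => Hb1 Hb2 Hb3.
  have [Hg _] := Hb3 _ _ H0.
  apply: (extr_app (psi := psi) (g := bp_restr al [:: 1]) IH').
  + exact: restr_bp.
  + exact: Hg.
  + by exists a; rewrite /bp_restr /= Ha.
  + move=> [|[|[|[|j]]] d]; rewrite /= ?pfx_cons ?pfx_nil ?drop0 /=; by [rewrite ?H0 | rewrite Hnone].
  + move=> [|[|[|[|j]]] d]; rewrite /del /= ?pfx_cons ?pfx_nil ?drop0 /=; by [rewrite ?H0 | rewrite Hnone].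
Qed.

Definition nodeval (Om : var -> formula) (N : term) : option sym :=
  match N with
  | Var x => Some (SForm (Om x))
  | App _ _ => omap SApp (typeof Om N)
  | Lam _ _ => None
  end.

Definition Ai O Om M i := bp_trunc O M (bp_of Om M) i.

Lemma Free_uniq O M : uniq (Free O M).
Proof. by rewrite /Free sort_uniq undup_uniq. Qed.

Lemma mem_Free O M x : (x \in Free O M) = (x \in fv M).
Proof. by rewrite /Free mem_sort mem_undup. Qed.

Lemma Free_le O M i y : 0 < i <= size (Free O M) -> y \in take i (Free O M) ->
  O y <= O (nth 0 (Free O M) i.-1).
Proof.
move=> /andP [Hi Hs] Hy.
have Hidx := index_ltn Hy.
have Hin : y \in Free O M by apply: mem_take Hy.
rewrite -{1}(nth_index 0 Hin).
apply: (sorted_leq_nth (leT := fun x y => O x <= O y)).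
- by move=> a b c; apply: leq_trans.
- by move=> a.
- by apply: sort_sorted => a b; apply: leq_total.
- by rewrite inE index_mem.
- by rewrite inE; case: i Hi Hs {Hy Hidx} => [|i] // _ /=.
- by case: i Hi Hs Hidx {Hy} => [|i] // _ /=.
Qed.

Lemma Free_notin O M i : 0 < i <= size (Free O M) ->
  nth 0 (Free O M) i.-1 \notin take i.-1 (Free O M).
Proof.
move=> /andP [Hi Hs]; apply/negP => /index_ltn.
by rewrite index_uniq ?ltnn ?Free_uniq //; case: i Hi Hs.
Qed.

Lemma Free_take O M i : 0 < i <= size (Free O M) ->
  take i (Free O M) = rcons (take i.-1 (Free O M)) (nth 0 (Free O M) i.-1).
Proof. by move=> /andP [Hi Hs]; case: i Hi Hs => [|i] // _ Hs; rewrite (take_nth 0). Qed.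

Lemma A_val O Om M i c : Ai O Om M i c =
  if subterm M c is Some N then
    (if all (fun x => x \in take i (Free O M)) (fv N) then nodeval Om N else None)
  else None.
Proof.
rewrite /Ai /bp_trunc /bp_of; case: (subterm M c) => [N|] //.
case H: all => //.
have -> : all (fun x => x \in fv M) (fv N).
  apply: sub_all H => x /mem_take; by rewrite mem_Free.
by case: N H.
Qed.

Lemma A_var O Om M i c x : subterm M c = Some (Var x) -> x \in take i (Free O M) ->
  Ai O Om M i c = Some (SForm (Om x)).
Proof. by move=> H Hx; rewrite A_val H /= Hx. Qed.

Lemma A_some O Om M i c : Ai O Om M i c <> None ->
  exists N, subterm M c = Some N /\ all (fun x => x \in take i (Free O M)) (fv N)
            /\ Ai O Om M i c = nodeval Om N.
Proof.
rewrite A_val; case: (subterm M c) => [N|] //; case: ifP => // H _.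
by exists N; rewrite ?H.
Qed.

Lemma A_shape O Om M i : shape_ok M (Ai O Om M i).
Proof.
move=> c; case E: (Ai O Om M i c) => [[f|f]|] //.
- have [|N [HN [_ HV]]] := A_some (c := c) (i := i) (Om := Om) (O := O) (M := M); first by rewrite E.
  rewrite E in HV; case: N HN HV => [x|y N'|N1 N2] HN HV //; first by exists x.
  by move: HV; rewrite /nodeval; case: typeof => [[]|].
- have [|N [HN [_ HV]]] := A_some (c := c) (i := i) (Om := Om) (O := O) (M := M); first by rewrite E.
  rewrite E in HV; case: N HN HV => [x|y N'|N1 N2] HN HV //; last by exists N1, N2.
Qed.

Lemma A_bp O Om M i : HRM O M -> beta_normal M -> is_blueprint (Ai O Om M i).
Proof.
move=> HH Hbn; split.
- exists (addrs M) => c /A_some [N [HN _]]; apply: addrsP; by rewrite HN.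
- by move=> c /A_some [N [HN _]]; apply: subterm_pos HN.
- move=> c psi E.
  have [|N [HN [Hall HV]]] := A_some (c := c) (i := i) (Om := Om) (O := O) (M := M); first by rewrite E.
  rewrite E in HV; case: N HN Hall HV => [x|y N'|N1 N2] HN Hall HV //.
  clear HV.
  have HHN := HRM_sub HH HN; have HbN := bn_sub Hbn HN.
  move: HHN HbN => /= /and3P [_ _ Hhas] /and3P [HL Hb1 _].
  have [h Hh] := bn_fv Hb1 HL.
  have [z /andP [Hz _]] : exists z, (z \in fv N2) && (O h <= O z).
    by move/allP: Hhas => /(_ h Hh) /hasP [z Hz Hle]; exists z; rewrite Hz.
  have [d1 Hd1] := fv_occ Hh; have [d2 Hd2] := fv_occ Hz.
  move/allP: Hall => Hall.
  split; [exists d1|exists d2]; rewrite /bp_restr -cats1 -catA /=.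
  + rewrite (@A_var _ _ _ _ _ h) //; last by apply: Hall; rewrite mem_cat Hh.
    by rewrite subterm_cat HN.
  + rewrite (@A_var _ _ _ _ _ z) //; last by apply: Hall; rewrite mem_cat Hz orbT.
    by rewrite subterm_cat HN.
Qed.

Lemma A_zero O Om M : beta_normal M -> Ai O Om M 0 =1 bp_empty.
Proof.
move=> Hbn c; rewrite A_val /bp_empty; case E: (subterm M c) => [N|] //.
case: ifP => // Hall.
have := bn_sub Hbn E; case: N E Hall => //= [x|N1 N2] E.
  by rewrite andbT take0.
move=> Hall Hb; have [x Hx] := bn_fv (T := App N1 N2) Hb isT.
by move/allP: Hall => /(_ x Hx); rewrite take0.
Qed.

Lemma A_full O Om M : Ai O Om M (size (Free O M)) =1 bp_of Om M.
Proof.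
move=> c; rewrite /Ai /bp_trunc /bp_of take_size.
case: (subterm M c) => [N|] //.
have -> : all (fun x => x \in Free O M) (fv N) = all (fun x => x \in fv M) (fv N).
  by apply: eq_all => x; rewrite mem_Free.
by case: all.
Qed.

Lemma extr_seq_extr phi bs al be be' :
  extr_seq phi bs al be -> be =1 be' -> extr_seq phi bs al be'.
Proof.
elim: bs al => [|a bs IH] al /=; first by move=> H E c; rewrite H E.
by move=> [g [H1 H2]] E; exists g; split => //; apply: IH.
Qed.

Lemma x_facts O M i : wf_term M -> 0 < i <= size (Free O M) ->
  let x := nth 0 (Free O M) i.-1 in
  [/\ x \in fv M, x \notin bv M & x \in take i (Free O M)].
Proof.
move=> Hwf Hi x.
have Hin : x \in Free O M by apply: mem_nth; case/andP: Hi => Hi Hs; case: i Hi Hs {x} => [|i].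
have Hfv : x \in fv M by rewrite -(mem_Free O).
split => //.
  by move: Hwf => /andP [_ /allP /(_ x Hfv)].
by rewrite Free_take // mem_rcons inE eqxx.
Qed.

Lemma final_eq O Om M i bs : wf_term M -> 0 < i <= size (Free O M) ->
  (forall a, a \in bs <-> subterm M a = Some (Var (nth 0 (Free O M) i.-1))) ->
  D bs (Ai O Om M i) =1 Ai O Om M i.-1.
Proof.
move=> Hwf Hi Hbs.
have [Hfv Hbv Htk] := x_facts Hwf Hi.
set x := nth 0 (Free O M) i.-1 in Hbs Hfv Hbv Htk *.
have Hni := Free_notin Hi.
move=> c; rewrite /D.
case Hh: has.
  move/hasP: Hh => [s /Hbs Hs /pfxP [d Ed]]; subst s.
  rewrite A_val; move: Hs; rewrite subterm_cat.
  case E: (subterm M c) => [N|] // HN.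
  have HxN : x \in fv N.
    apply: (occ_fv HN); apply/negP => /(bv_sub E) H; by rewrite H in Hbv.
  case: ifP => // /allP /(_ x HxN) H; by rewrite H in Hni.
rewrite !A_val; case E: (subterm M c) => [N|] //.
have HxN : x \notin fv N.
  apply/negP => /fv_occ [d Hd].
  move/negbT: Hh => /hasP; apply; exists (c ++ d); last exact: pfx_catr.
  by apply/Hbs; rewrite subterm_cat E.
rewrite (@eq_in_all _ _ (fun y => y \in take i.-1 (Free O M))) //.
move=> y Hy /=; rewrite Free_take // mem_rcons inE.
case: eqP => // Ey; by move: HxN; rewrite /x -Ey Hy.
Qed.

Lemma seq_exists O Om M i : injective O -> HRM O M -> beta_normal M -> wf_term M ->
  0 < i <= size (Free O M) ->
  let x := nth 0 (Free O M) i.-1 in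
  extr_seq (Om x) (occ x M) (Ai O Om M i) (D (occ x M) (Ai O Om M i)).
Proof.
move=> HO HH Hbn Hwf Hi x.
have [Hfv Hbv Htk] := x_facts Hwf Hi.
set L := occ x M.
set A := Ai O Om M i.
have HA := A_bp Om i HH Hbn.
have HAs := A_shape O Om M i.
suff : forall R S, S ++ R = L -> extr_seq (Om x) R (D S A) (D L A).
  by move/(_ L [::] erefl) => H; apply: extr_seq_extr H _ => c; rewrite /D.
elim=> [|a R IH] S ESR /=.
  by rewrite cats0 in ESR; subst S.
exists (D (rcons S a) A); split; last by apply: IH; rewrite cat_rcons.
have HuL : uniq L by apply: occ_uniq.
have HaL : a \in L by rewrite -ESR mem_cat inE eqxx orbT.
have HaS : a \notin S.
  by move: HuL; rewrite -ESR cat_uniq /= negb_or => /and3P [_ /andP [H _] _].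
have Ha : subterm M a = Some (Var x) by apply/occP.
have Hsh : shape_ok M (D S A).
  move=> c; move: (HAs c); rewrite /D; by case: has.
apply: (extr_ext (al := D S A) (be := del a (D S A))) => //; last first.
  by move=> c; rewrite /del /D has_rcons; case: pfx; case: has.
apply: ext_complete Hsh _ _ => //.
- exact: D_bp.
- rewrite /D; case Hh: has; last by apply: A_var.
  move/hasP: Hh => [s Hs /pfxP [d Ed]]; subst s.
  have : subterm M (a ++ d) = Some (Var x) by apply/occP; rewrite -/L -ESR mem_cat Hs.
  rewrite subterm_cat Ha; case: d Hs => [|k d] Hs //=.
  by move: Hs; rewrite cats0 (negbTE HaS).
- move=> p k d Ea.
  rewrite /D; case Hh: has; first by left.
  case EA: (A p) => [v|]; last by left.
  have [|N [HN [Hall HV]]] := A_some (c := p) (i := i) (Om := Om) (O := O) (M := M).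
    by rewrite /A in EA; rewrite EA.
  rewrite /A in EA; rewrite EA in HV.
  move: Ha; rewrite Ea subterm_cat HN => Hk.
  case: N HN Hall HV Hk => [y|y N'|N1 N2] HN Hall HV Hk //.
  right; have [Ek|Ek] := subterm_k (T := App N1 N2) Hk; subst k.
  + exfalso.
    move: Hk => /= Hk.
    have HbN1 : x \notin bv N1.
      apply/negP => H; have : x \in bv M.
        by apply: (@bv_sub M (rcons p 1) N1 x _ H); rewrite -cats1 subterm_cat HN /= subterm_nil.
      by rewrite (negbTE Hbv).
    have HxN1 := occ_fv Hk HbN1.
    have := HRM_sub HH HN => /= /and3P [_ _ /allP /(_ x HxN1) /hasP [z Hz Hle]].
    have Hzt : z \in take i (Free O M) by move/allP: Hall; apply; rewrite mem_cat Hz orbT.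
    have Hzx : z = x.
      by apply: HO; apply/eqP; rewrite eqn_leq Hle andbT; apply: Free_le.
    subst z; have [d' Hd'] := fv_occ Hz.
    have Ha' : (p ++ 2 :: d') \in L by apply/occP; rewrite subterm_cat HN.
    have HaL' : (p ++ 1 :: d) \in L by rewrite -Ea.
    have Hord : index (p ++ 2 :: d') L < index a L by rewrite Ea; apply: occ_order.
    have E1 : index a L = size S.
      by rewrite -ESR index_cat (negbTE HaS) /= eqxx addn0.
    rewrite E1 -ESR index_cat in Hord; move: Hord.
    case Hin: (p ++ 2 :: d' \in S) => Hord.
      by move/negbT: Hh => /hasP; apply; exists (p ++ 2 :: d') => //; apply: pfx_catr.
    by rewrite ltnNge leq_addr in Hord.
  + split => //; move: HV; rewrite /nodeval; case: (typeof _ _) => [f|] // [->]; by exists f.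
Qed.

Lemma lams_sub1 ys M a : subterm (lams ys M) (nseq (size ys) 1 ++ a) = subterm M a.
Proof. by elim: ys => [|y ys IH] //=. Qed.

Lemma lams_sub2 ys M c : ~~ pfx (nseq (size ys) 1) c ->
  subterm (lams ys M) c = None \/ exists y N, subterm (lams ys M) c = Some (Lam y N).
Proof.
elim: ys c => [|y ys IH] c /=; first by rewrite pfx_nil.
case: c => [|k c]; first by right; exists y, (lams ys M).
rewrite pfx_cons; case: (k =P 1) => [->|Hk] /= H; first exact: IH.
by left; case: k Hk {H} => [|[|k]].
Qed.

Lemma lams_fv ys M x : (x \in fv (lams ys M)) = (x \in fv M) && (x \notin ys).
Proof.
elim: ys => [|y ys IH] /=; first by rewrite andbT.
by rewrite mem_filter IH inE negb_or andbCA andbA.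
Qed.

Lemma part1 O Om M i : i <= size (Free O M) ->
  forall c, bp_of Om (lams (drop i (Free O M)) M) c =
    if pfx (nseq (size (Free O M) - i) 1) c
    then Ai O Om M i (drop (size (Free O M) - i) c) else None.
Proof.
move=> Hi c; set ys := drop i (Free O M).
have Hsz : size ys = size (Free O M) - i by rewrite size_drop.
case Hp: pfx.
  move/pfxP: Hp => [a ->]; rewrite drop_size_cat ?size_nseq //.
  rewrite /bp_of -Hsz lams_sub1 A_val; case: (subterm M a) => [N|] //.
  have -> : all (fun x => x \in fv (lams ys M)) (fv N) =
            all (fun x => x \in take i (Free O M)) (fv N).
    apply: eq_all => x; rewrite lams_fv /ys -(mem_Free O).
    have := Free_uniq O M; rewrite -{1}(cat_take_drop i (Free O M)) cat_uniq => /and3P [_ Hd _].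
    case Ht: (x \in take i (Free O M)).
      have -> : x \in Free O M by apply: mem_take Ht.
      rewrite /=; apply/negP => Hd'; move/hasP: Hd; apply; by exists x.
    apply/negbTE/negP => /andP [Hx Hnd]; move: Hx.
    by rewrite -(cat_take_drop i (Free O M)) mem_cat Ht (negbTE Hnd).
  by case: all => //; case: N.
rewrite -Hsz in Hp; case: (lams_sub2 M (negbT Hp)) => [H|[y [N H]]];
  by rewrite /bp_of H // ; case: all.
Qed.

Lemma chain O Om M : injective O -> HRM O M -> beta_normal M -> wf_term M ->
  forall j, j <= size (Free O M) -> forall al', al' =1 Ai O Om M j ->
  Fchain al' (rev (map Om (take j (Free O M)))).
Proof.
move=> HO HH Hbn Hwf; elim=> [|j IH] Hj al' E.
  by rewrite take0 /= => c; rewrite E A_zero.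
have Hi : 0 < j.+1 <= size (Free O M) by rewrite Hj.
rewrite (take_nth 0 Hj) map_rcons rev_rcons /=.
exists (Ai O Om M j); split; last by apply: IH => //; apply: ltnW.
have [Hfv _ _] := x_facts Hwf Hi.
have := seq_exists Om HO HH Hbn Hwf Hi => /= Hs.
have {}Hs := extr_seq_extr Hs (final_eq Om Hwf Hi (fun a => occP _ _ a)).
have [d Hd] := fv_occ Hfv.
move: Hs; case E2: (occ _ _) => [|a L].
  by have := (occP (nth 0 (Free O M) j) M d).2 Hd; rewrite E2.
move/extr_seq_plus => Hp; apply: extr_plus_extl Hp _ => c; by rewrite E.
Qed.
Unset Implicit Arguments.

Theorem lemma2p15 (O : var -> nat) (Om : var -> formula)
  (HO : injective O) (HOm : forall (phi : formula) (k : nat), exists x, k <= x /\ Om x = phi)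
  (M : term) (HM : LambdaNF O Om M) :
  let al := bp_of Om M in
  let xs := Free O M in
  let n := size xs in
  let al_ := fun i => bp_trunc O M al i in
  (forall i, i <= n ->
     let be := bp_of Om (lams (drop i xs) M) in
     (forall c, be c <> None <-> exists a, c = nseq (n - i) 1 ++ a /\ al_ i a <> None) /\
     (forall a, be (nseq (n - i) 1 ++ a) = al_ i a)) /\
  (forall i, 1 <= i <= n ->
     let x := nth 0 xs i.-1 in
     let chi := Om x in
     (exists as_ : seq address,
        [/\ uniq as_, (forall a, a \in as_ <-> subterm M a = Some (Var x))
          & extr_seq chi as_ (al_ i) (al_ i.-1)]) /\
     (forall (bs : seq address) (al' : blueprint),
        uniq bs -> (forall a, a \in bs <-> subterm M a = Some (Var x)) ->
        extr_seq chi bs (al_ i) al' -> al' =1 al_ i.-1)) /\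
  inF al (map Om xs).
Proof.
case: HM => Hwf [psi Hty] Hbn.
have HH := typed_HRM Hty.
move=> al xs n al_.
split; [|split].
- move=> i Hi be; split.
  + move=> c; rewrite /be (part1 Om Hi c); split.
      case Hp: pfx => // H; move/pfxP: Hp => [a Ea]; exists a; split => //.
      by move: H; rewrite Ea drop_size_cat ?size_nseq.
    move=> [a [-> H]]; rewrite pfx_catr drop_size_cat ?size_nseq //.
  + by move=> a; rewrite /be (part1 Om Hi) pfx_catr drop_size_cat ?size_nseq.
- move=> i Hi x chi; split.
  + exists (occ x M); split.
    * exact: occ_uniq.
    * exact: occP.
    * apply: extr_seq_extr (seq_exists Om HO HH Hbn Hwf Hi) _.
      exact: (final_eq Om Hwf Hi (fun a => occP _ _ a)).
  + move=> bs al' _ Hbs /extr_seq_sound E c; rewrite E.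
    exact: (final_eq Om Hwf Hi Hbs).
- rewrite /inF -(take_size xs); apply: (@chain O Om M HO HH Hbn Hwf (size xs) (leqnn _)) => c.
  by rewrite A_full.
Qed.
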